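(* Let $\mathcal{C}$ be a rigid abelian monoidal category whose unit object $\mathbbm{1}$ is simple. Let $A$ be a non-zero algebra in $\mathcal{C}$ which admits a simple left (resp. right) $A$-module in $\mathcal{C}$. If $A$ is a left (resp. right) essential division algebra in $\mathcal{C}$, then $A$ is a left (resp. right) simplistic division algebra in $\mathcal{C}$.
   Context: An abelian monoidal category is a monoidal category whose underlying category is abelian and whose functors $(X\otimes-)$, $(-\otimes X)$ are additive; rigid means every object has left and right duals. For an algebra $A$ in $\mathcal{C}$, $A\text{-}\mathsf{Mod}(\mathcal{C})$ and $\mathsf{Mod}\text{-}A(\mathcal{C})$ denote the categories of left and right $A$-modules in $\mathcal{C}$; a module is simple if it is a simple object of the corresponding module category. A non-zero algebra $A$ is a left (resp. right) simplistic division algebra if the regular module $(A,m_A)$ is simple in $A\text{-}\mathsf{Mod}(\mathcal{C})$ (resp. $\mathsf{Mod}\text{-}A(\mathcal{C})$). A non-zero algebra $A$ is a left (resp. right) essential division algebra if the free module functor $(A\otimes -):\mathcal{C}\to A\text{-}\mathsf{Mod}(\mathcal{C})$, $X\mapsto (A\otimes X, m_A\otimes \mathrm{id}_X)$ (resp. $(-\otimes A):\mathcal{C}\to\mathsf{Mod}\text{-}A(\mathcal{C})$, $X\mapsto (X\otimes A,\mathrm{id}_X\otimes m_A)$) is essentially surjective. *)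

(* Defs.v *)
From HB Require Import structures.
From mathcomp Require Import all_boot all_algebra.
Import GRing.Theory.
Local Open Scope ring_scope.

(** * Data of a (preadditive) monoidal category.
    Hom-sets are Z-modules (abelian groups); morphism equality is Leibniz. *)
Record MonCat := {
  Ob : Type;
  Hom : Ob -> Ob -> zmodType;
  idm : forall a, Hom a a;
  comp : forall a b c, Hom b c -> Hom a b -> Hom a c;
  tens : Ob -> Ob -> Ob;
  tensh : forall a b c d, Hom a b -> Hom c d -> Hom (tens a c) (tens b d);
  unitO : Ob;
  assoc : forall a b c, Hom (tens (tens a b) c) (tens a (tens b c));
  associnv : forall a b c, Hom (tens a (tens b c)) (tens (tens a b) c);
  lunit : forall a, Hom (tens unitO a) a;
  lunitinv : forall a, Hom a (tens unitO a);
  runit : forall a, Hom (tens a unitO) a;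
  runitinv : forall a, Hom a (tens a unitO)
}.

Arguments Hom {m}.
Arguments idm {m}.
Arguments comp {m a b c}.
Arguments tens {m}.
Arguments tensh {m a b c d}.
Arguments unitO {m}.
Arguments assoc {m}.
Arguments associnv {m}.
Arguments lunit {m}.
Arguments lunitinv {m}.
Arguments runit {m}.
Arguments runitinv {m}.

Notation "g \oc f" := (comp g f) (at level 40, left associativity).

Section CatDefs.
Variable C : MonCat.
Implicit Types (a b c d k q x z X L R S : Ob C).

Definition is_preadditive_category : Prop :=
  (forall a b (f : Hom a b), idm b \oc f = f) /\
  (forall a b (f : Hom a b), f \oc idm a = f) /\
  (forall a b c d (h : Hom c d) (g : Hom b c) (f : Hom a b),
      h \oc (g \oc f) = (h \oc g) \oc f) /\
  (forall a b c (g g' : Hom b c) (f : Hom a b),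
      (g + g') \oc f = g \oc f + g' \oc f) /\
  (forall a b c (g : Hom b c) (f f' : Hom a b),
      g \oc (f + f') = g \oc f + g \oc f').

(** zero object (in a preadditive category: identity is zero) *)
Definition is_zero_obj (z : Ob C) : Prop := idm z = 0.

Definition is_mono {a b : Ob C} (m : Hom a b) : Prop :=
  forall x (g h : Hom x a), m \oc g = m \oc h -> g = h.
Definition is_epi {a b : Ob C} (e : Hom a b) : Prop :=
  forall x (g h : Hom b x), g \oc e = h \oc e -> g = h.
Definition is_iso {a b : Ob C} (f : Hom a b) : Prop :=
  exists g : Hom b a, g \oc f = idm a /\ f \oc g = idm b.

Definition is_kernel {k a b : Ob C} (i : Hom k a) (f : Hom a b) : Prop :=
  f \oc i = 0 /\
  forall x (g : Hom x a), f \oc g = 0 -> exists! h : Hom x k, i \oc h = g.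
Definition is_cokernel {a b q : Ob C} (p : Hom b q) (f : Hom a b) : Prop :=
  p \oc f = 0 /\
  forall x (g : Hom b x), g \oc f = 0 -> exists! h : Hom q x, h \oc p = g.

Definition is_abelian : Prop :=
  is_preadditive_category /\
  (exists z : Ob C, is_zero_obj z) /\
  (forall a b : Ob C, exists (c : Ob C) (i1 : Hom a c) (i2 : Hom b c)
      (p1 : Hom c a) (p2 : Hom c b),
      p1 \oc i1 = idm a /\ p2 \oc i2 = idm b /\ p1 \oc i2 = 0 /\
      p2 \oc i1 = 0 /\ i1 \oc p1 + i2 \oc p2 = idm c) /\
  (forall a b (f : Hom a b), exists k (i : Hom k a), is_kernel i f) /\
  (forall a b (f : Hom a b), exists q (p : Hom b q), is_cokernel p f) /\
  (forall a b (m : Hom a b), is_mono m -> exists c (f : Hom b c), is_kernel m f) /\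
  (forall a b (e : Hom a b), is_epi e -> exists c (f : Hom c a), is_cokernel e f).

Definition is_monoidal : Prop :=
  (forall a b : Ob C, tensh (idm a) (idm b) = idm (tens a b)) /\
  (forall a b c a' b' c' (f : Hom a b) (f' : Hom b c) (g : Hom a' b') (g' : Hom b' c'),
      tensh (f' \oc f) (g' \oc g) = tensh f' g' \oc tensh f g) /\
  (forall a b c : Ob C, assoc a b c \oc associnv a b c = idm _ /\
                        associnv a b c \oc assoc a b c = idm _) /\
  (forall a : Ob C, lunit a \oc lunitinv a = idm _ /\ lunitinv a \oc lunit a = idm _) /\
  (forall a : Ob C, runit a \oc runitinv a = idm _ /\ runitinv a \oc runit a = idm _) /\
  (forall a b c a' b' c' (f : Hom a a') (g : Hom b b') (h : Hom c c'),
      assoc a' b' c' \oc tensh (tensh f g) h = tensh f (tensh g h) \oc assoc a b c) /\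
  (forall a b (f : Hom a b), lunit b \oc tensh (idm unitO) f = f \oc lunit a) /\
  (forall a b (f : Hom a b), runit b \oc tensh f (idm unitO) = f \oc runit a) /\
  (forall a b c d : Ob C,
      tensh (idm a) (assoc b c d) \oc assoc a (tens b c) d \oc tensh (assoc a b c) (idm d)
      = assoc a b (tens c d) \oc assoc (tens a b) c d) /\
  (forall a b : Ob C,
      tensh (idm a) (lunit b) \oc assoc a unitO b = tensh (runit a) (idm b)).

Definition tensor_additive : Prop :=
  (forall x a b (f g : Hom a b),
      tensh (idm x) (f + g) = tensh (idm x) f + tensh (idm x) g) /\
  (forall x a b (f g : Hom a b),
      tensh (f + g) (idm x) = tensh f (idm x) + tensh g (idm x)).

(** L is a (left) dual of R: ev : L ⊗ R -> 1, coev : 1 -> R ⊗ L, zigzag identities *)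
Definition dual_pair (L R : Ob C) (ev : Hom (tens L R) unitO)
    (coev : Hom unitO (tens R L)) : Prop :=
  runit R \oc tensh (idm R) ev \oc assoc R L R \oc tensh coev (idm R) \oc lunitinv R
    = idm R /\
  lunit L \oc tensh ev (idm L) \oc associnv L R L \oc tensh (idm L) coev \oc runitinv L
    = idm L.

Definition is_rigid : Prop :=
  forall X : Ob C,
    (exists L ev coev, dual_pair L X ev coev) /\
    (exists R ev coev, dual_pair X R ev coev).

Definition rigid_abelian_monoidal : Prop :=
  is_abelian /\ is_monoidal /\ tensor_additive /\ is_rigid.

Definition simple_obj (X : Ob C) : Prop :=
  ~ is_zero_obj X /\
  forall S (i : Hom S X), is_mono i -> is_zero_obj S \/ is_iso i.

Record Alg := { alg_obj : Ob C;
                alg_mul : Hom (tens alg_obj alg_obj) alg_obj;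
                alg_unit : Hom unitO alg_obj }.

Definition is_algebra (A : Alg) : Prop :=
  let m := alg_mul A in let u := alg_unit A in let a := alg_obj A in
  m \oc tensh m (idm a) = m \oc tensh (idm a) m \oc assoc a a a /\
  m \oc tensh u (idm a) = lunit a /\
  m \oc tensh (idm a) u = runit a.

Variable A : Alg.
Let a := alg_obj A.
Let m := alg_mul A.
Let u := alg_unit A.

Record LMod := { lm_obj : Ob C; lm_act : Hom (tens a lm_obj) lm_obj }.

Definition is_lmod (M : LMod) : Prop :=
  lm_act M \oc tensh m (idm (lm_obj M))
    = lm_act M \oc tensh (idm a) (lm_act M) \oc assoc a a (lm_obj M) /\
  lm_act M \oc tensh u (idm (lm_obj M)) = lunit (lm_obj M).

Definition lmod_hom (M N : LMod) (f : Hom (lm_obj M) (lm_obj N)) : Prop :=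
  f \oc lm_act M = lm_act N \oc tensh (idm a) f.

Definition lmod_mono (M N : LMod) (i : Hom (lm_obj M) (lm_obj N)) : Prop :=
  forall P : LMod, is_lmod P ->
  forall g h : Hom (lm_obj P) (lm_obj M),
    lmod_hom P M g -> lmod_hom P M h -> i \oc g = i \oc h -> g = h.

Definition lmod_iso (M N : LMod) (f : Hom (lm_obj M) (lm_obj N)) : Prop :=
  exists g : Hom (lm_obj N) (lm_obj M),
    lmod_hom N M g /\ g \oc f = idm _ /\ f \oc g = idm _.

Definition lmod_zero (M : LMod) : Prop := idm (lm_obj M) = 0.

Definition simple_lmod (M : LMod) : Prop :=
  is_lmod M /\ ~ lmod_zero M /\
  forall N : LMod, is_lmod N ->
  forall i : Hom (lm_obj N) (lm_obj M),
    lmod_hom N M i -> lmod_mono N M i -> lmod_zero N \/ lmod_iso N M i.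

Definition regular_lmod : LMod := {| lm_obj := a; lm_act := m |}.

(** free module (A ⊗ X, m_A ⊗ id_X) (associator made explicit) *)
Definition free_lmod (X : Ob C) : LMod :=
  {| lm_obj := tens a X; lm_act := tensh m (idm X) \oc associnv a a X |}.

Definition left_essential_division : Prop :=
  ~ is_zero_obj a /\
  forall M : LMod, is_lmod M ->
    exists (X : Ob C) (f : Hom (lm_obj (free_lmod X)) (lm_obj M)),
      lmod_hom (free_lmod X) M f /\ lmod_iso (free_lmod X) M f.

Definition left_simplistic_division : Prop :=
  ~ is_zero_obj a /\ simple_lmod regular_lmod.

Record RMod := { rm_obj : Ob C; rm_act : Hom (tens rm_obj a) rm_obj }.

Definition is_rmod (M : RMod) : Prop :=
  rm_act M \oc tensh (rm_act M) (idm a)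
    = rm_act M \oc tensh (idm (rm_obj M)) m \oc assoc (rm_obj M) a a /\
  rm_act M \oc tensh (idm (rm_obj M)) u = runit (rm_obj M).

Definition rmod_hom (M N : RMod) (f : Hom (rm_obj M) (rm_obj N)) : Prop :=
  f \oc rm_act M = rm_act N \oc tensh f (idm a).

Definition rmod_mono (M N : RMod) (i : Hom (rm_obj M) (rm_obj N)) : Prop :=
  forall P : RMod, is_rmod P ->
  forall g h : Hom (rm_obj P) (rm_obj M),
    rmod_hom P M g -> rmod_hom P M h -> i \oc g = i \oc h -> g = h.

Definition rmod_iso (M N : RMod) (f : Hom (rm_obj M) (rm_obj N)) : Prop :=
  exists g : Hom (rm_obj N) (rm_obj M),
    rmod_hom N M g /\ g \oc f = idm _ /\ f \oc g = idm _.

Definition rmod_zero (M : RMod) : Prop := idm (rm_obj M) = 0.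

Definition simple_rmod (M : RMod) : Prop :=
  is_rmod M /\ ~ rmod_zero M /\
  forall N : RMod, is_rmod N ->
  forall i : Hom (rm_obj N) (rm_obj M),
    rmod_hom N M i -> rmod_mono N M i -> rmod_zero N \/ rmod_iso N M i.

Definition regular_rmod : RMod := {| rm_obj := a; rm_act := m |}.

Definition free_rmod (X : Ob C) : RMod :=
  {| rm_obj := tens X a; rm_act := tensh (idm X) m \oc assoc X a a |}.

Definition right_essential_division : Prop :=
  ~ is_zero_obj a /\
  forall M : RMod, is_rmod M ->
    exists (X : Ob C) (f : Hom (rm_obj (free_rmod X)) (rm_obj M)),
      rmod_hom (free_rmod X) M f /\ rmod_iso (free_rmod X) M f.

Definition right_simplistic_division : Prop :=
  ~ is_zero_obj a /\ simple_rmod regular_rmod.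

End CatDefs.

(* Main.v *)
From mathcomp Require Import all_boot all_algebra.
Require Import Defs.
Import GRing.Theory.
Local Open Scope ring_scope.
Set Implicit Arguments. Unset Strict Implicit.

Local Notation "f ⊗ g" := (tensh f g) (at level 35, no associativity).

Section Basics.
Variable C : MonCat.
Hypothesis HP : is_preadditive_category C.
Hypothesis HM : is_monoidal C.
Hypothesis HT : tensor_additive C.
Implicit Types (a b c d x y z : Ob C).

Lemma idl a b (f : Hom a b) : idm b \oc f = f.
Proof. by case: HP. Qed.
Lemma idr a b (f : Hom a b) : f \oc idm a = f.
Proof. by case: HP => _ []. Qed.
Lemma cA a b c d (h : Hom c d) (g : Hom b c) (f : Hom a b) :
  h \oc (g \oc f) = h \oc g \oc f.
Proof. by case: HP => _ [_ []]. Qed.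
Lemma cDl a b c (g g' : Hom b c) (f : Hom a b) : (g + g') \oc f = g \oc f + g' \oc f.
Proof. by case: HP => _ [_ [_ []]]. Qed.
Lemma cDr a b c (g : Hom b c) (f f' : Hom a b) : g \oc (f + f') = g \oc f + g \oc f'.
Proof. by case: HP => _ [_ [_ []]]. Qed.
Lemma comp0l a b c (f : Hom a b) : (0 : Hom b c) \oc f = 0.
Proof.
have h : (0 : Hom b c) \oc f + 0 \oc f = 0 \oc f + 0 by rewrite addr0 -cDl addr0.
exact: addrI h.
Qed.
Lemma comp0r a b c (g : Hom b c) : g \oc (0 : Hom a b) = 0.
Proof.
have h : g \oc (0 : Hom a b) + g \oc 0 = g \oc 0 + 0 by rewrite addr0 -cDr addr0.
exact: addrI h.
Qed.
Lemma cBl a b c (g g' : Hom b c) (f : Hom a b) : (g - g') \oc f = g \oc f - g' \oc f.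
Proof.
apply/eqP; rewrite eq_sym subr_eq -cDl subrK //.
Qed.
Lemma cBr a b c (g : Hom b c) (f f' : Hom a b) : g \oc (f - f') = g \oc f - g \oc f'.
Proof.
apply/eqP; rewrite eq_sym subr_eq -cDr subrK //.
Qed.

Lemma tid a b : idm a ⊗ idm b = idm (tens a b).
Proof. by case: HM. Qed.
Lemma tcomp a b c a' b' c' (f : Hom a b) (f' : Hom b c) (g : Hom a' b') (g' : Hom b' c') :
  (f' \oc f) ⊗ (g' \oc g) = f' ⊗ g' \oc f ⊗ g.
Proof. by case: HM => _ []. Qed.
Lemma aK a b c : assoc a b c \oc associnv a b c = idm _.
Proof. by case: HM => _ [_ [h _]]; case: (h a b c). Qed.
Lemma aKV a b c : associnv a b c \oc assoc a b c = idm _.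
Proof. by case: HM => _ [_ [h _]]; case: (h a b c). Qed.
Lemma lK a : lunit a \oc lunitinv a = idm _.
Proof. by case: HM => _ [_ [_ [h _]]]; case: (h a). Qed.
Lemma lKV a : lunitinv a \oc lunit a = idm _.
Proof. by case: HM => _ [_ [_ [h _]]]; case: (h a). Qed.
Lemma rK a : runit a \oc runitinv a = idm _.
Proof. by case: HM => _ [_ [_ [_ [h _]]]]; case: (h a). Qed.
Lemma rKV a : runitinv a \oc runit a = idm _.
Proof. by case: HM => _ [_ [_ [_ [h _]]]]; case: (h a). Qed.
Lemma anat a b c a' b' c' (f : Hom a a') (g : Hom b b') (h : Hom c c') :
  assoc a' b' c' \oc (f ⊗ g) ⊗ h = f ⊗ (g ⊗ h) \oc assoc a b c.
Proof. by case: HM => _ [_ [_ [_ [_ [h' _]]]]]. Qed.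
Lemma lnat a b (f : Hom a b) : lunit b \oc idm unitO ⊗ f = f \oc lunit a.
Proof. by case: HM => _ [_ [_ [_ [_ [_ [h' _]]]]]]. Qed.
Lemma rnat a b (f : Hom a b) : runit b \oc f ⊗ idm unitO = f \oc runit a.
Proof. by case: HM => _ [_ [_ [_ [_ [_ [_ [h' _]]]]]]]. Qed.
Lemma pent a b c d :
  idm a ⊗ assoc b c d \oc assoc a (tens b c) d \oc assoc a b c ⊗ idm d
  = assoc a b (tens c d) \oc assoc (tens a b) c d.
Proof. by case: HM => _ [_ [_ [_ [_ [_ [_ [_ [h' _]]]]]]]]. Qed.
Lemma tri a b : idm a ⊗ lunit b \oc assoc a unitO b = runit a ⊗ idm b.
Proof. by case: HM => _ [_ [_ [_ [_ [_ [_ [_ [_ h']]]]]]]]. Qed.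
Lemma tDl x a b (f g : Hom a b) : idm x ⊗ (f + g) = idm x ⊗ f + idm x ⊗ g.
Proof. by case: HT. Qed.
Lemma tDr x a b (f g : Hom a b) : (f + g) ⊗ idm x = f ⊗ idm x + g ⊗ idm x.
Proof. by case: HT. Qed.

Lemma rwc a b c d (g : Hom b c) (f : Hom a b) (k : Hom a c) :
  g \oc f = k -> forall (h : Hom d a), g \oc (f \oc h) = k \oc h.
Proof. by move=> <- h; rewrite cA. Qed.
Lemma rwc3 a b c e d (g : Hom b c) (f : Hom a b) (f0 : Hom e a) (k : Hom e c) :
  g \oc (f \oc f0) = k -> forall (h : Hom d e), g \oc (f \oc (f0 \oc h)) = k \oc h.
Proof. by move=> <- h; rewrite !cA. Qed.

Tactic Notation "rw" open_constr(L) := rewrite -?cA; first [rewrite L | rewrite (rwc L) | rewrite (rwc3 L)]; rewrite -?cA.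

Lemma ainat a b c a' b' c' (f : Hom a a') (g : Hom b b') (h : Hom c c') :
  associnv a' b' c' \oc f ⊗ (g ⊗ h) = (f ⊗ g) ⊗ h \oc associnv a b c.
Proof.
rewrite -[LHS]idr -(aK a b c) !cA -(cA _ _ (assoc a b c)) -anat.
by rewrite !cA aKV idl.
Qed.
Lemma tsl x a b c (f : Hom a b) (g : Hom b c) : idm x ⊗ (g \oc f) = idm x ⊗ g \oc idm x ⊗ f.
Proof. by rewrite -tcomp idl. Qed.
Lemma tsr x a b c (f : Hom a b) (g : Hom b c) : (g \oc f) ⊗ idm x = g ⊗ idm x \oc f ⊗ idm x.
Proof. by rewrite -tcomp idl. Qed.
Lemma tsplit a b c d (f : Hom a b) (g : Hom c d) : f ⊗ g = f ⊗ idm d \oc idm a ⊗ g.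
Proof. by rewrite -tcomp idl idr. Qed.
Lemma tsplit' a b c d (f : Hom a b) (g : Hom c d) : f ⊗ g = idm b ⊗ g \oc f ⊗ idm c.
Proof. by rewrite -tcomp idl idr. Qed.
Lemma t0l x a b : idm x ⊗ (0 : Hom a b) = 0.
Proof. by apply: (@addrI _ (idm x ⊗ (0 : Hom a b))); rewrite -tDl !addr0. Qed.
Lemma t0r x a b : (0 : Hom a b) ⊗ idm x = 0.
Proof. by apply: (@addrI _ ((0 : Hom a b) ⊗ idm x)); rewrite -tDr !addr0. Qed.
Lemma t0 a b c d (f : Hom c d) : (0 : Hom a b) ⊗ f = 0.
Proof. by rewrite tsplit t0r comp0l. Qed.
Lemma t0' a b c d (f : Hom a b) : f ⊗ (0 : Hom c d) = 0.
Proof. by rewrite tsplit t0l comp0r. Qed.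

Lemma cancel_r a b c (f f' : Hom b c) (g : Hom a b) (g' : Hom b a) :
  f \oc g = f' \oc g -> g \oc g' = idm b -> f = f'.
Proof. by move=> e h; rewrite -[f]idr -[f']idr -h !cA e. Qed.
Lemma cancel_l a b c (f f' : Hom a b) (g : Hom b c) (g' : Hom c b) :
  g \oc f = g \oc f' -> g' \oc g = idm b -> f = f'.
Proof. by move=> e h; rewrite -[f]idl -[f']idl -h -!cA e. Qed.

Lemma l_inj a b (f g : Hom a b) : idm unitO ⊗ f = idm unitO ⊗ g -> f = g.
Proof.
move=> e; apply: (cancel_r _ (lK a)); by rewrite -!lnat e.
Qed.
Lemma r_inj a b (f g : Hom a b) : f ⊗ idm unitO = g ⊗ idm unitO -> f = g.
Proof.
move=> e; apply: (cancel_r _ (rK a)); by rewrite -!rnat e.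
Qed.

Lemma pentR a b c d :
  idm a ⊗ assoc b c d \oc (assoc a (tens b c) d \oc assoc a b c ⊗ idm d)
  = assoc a b (tens c d) \oc assoc (tens a b) c d.
Proof. by rewrite cA pent. Qed.

Lemma K2 a b : lunit (tens a b) \oc assoc unitO a b = lunit a ⊗ idm b.
Proof.
apply: l_inj.
apply: (@cancel_r _ _ _ _ _ (assoc unitO (tens unitO a) b \oc assoc unitO unitO a ⊗ idm b)
   (associnv unitO unitO a ⊗ idm b \oc associnv unitO (tens unitO a) b)); last first.
  by rewrite -!cA [X in _ \oc X]cA -tsr aK tid idl aK.
rewrite tsl. rw (pentR _ _ _ _). rw (tri _ _).
rewrite -[idm (tens a b)]tid. rw (esym (anat _ _ _)).
rewrite -tri tsr. by rw (anat _ _ _).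
Qed.

Lemma K1 a b : runit (tens a b) = idm a ⊗ runit b \oc assoc a b unitO.
Proof.
apply: r_inj; apply: (@cancel_l _ _ _ _ _ (assoc a b unitO) (associnv a b unitO)); last exact: aKV.
symmetry; rewrite tsr. rw (anat _ _ _). rewrite -tri tsl. rw (pentR _ _ _ _).
rw (esym (anat _ _ _)). by rewrite tid tri.
Qed.

Lemma PI a b c d :
  assoc a b c ⊗ idm d \oc (associnv (tens a b) c d \oc associnv a b (tens c d))
  = associnv a (tens b c) d \oc idm a ⊗ associnv b c d.
Proof.
apply: (@cancel_l _ _ _ _ _ (idm a ⊗ assoc b c d \oc assoc a (tens b c) d)
          (associnv a (tens b c) d \oc idm a ⊗ associnv b c d)); last first.
  rw (esym (tsl _ _ _)). by rewrite aKV tid idl aKV.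
rw (pentR _ _ _ _). rw (aK _ _ _); rewrite idl aK.
rw (aK _ _ _). by rewrite idl -tsl aK tid.
Qed.

Lemma PL a b c d :
  idm a ⊗ associnv b c d \oc (assoc a b (tens c d) \oc assoc (tens a b) c d)
  = assoc a (tens b c) d \oc assoc a b c ⊗ idm d.
Proof.
rewrite -pentR. rw (esym (tsl _ _ _)). by rewrite aKV tid idl.
Qed.

Lemma tx a b c d (f : Hom a b) (g : Hom c d) :
  idm b ⊗ g \oc f ⊗ idm c = f ⊗ idm d \oc idm a ⊗ g.
Proof. by rewrite -tsplit -tsplit'. Qed.

Lemma K1inv a b : runitinv (tens a b) = associnv a b unitO \oc idm a ⊗ runitinv b.
Proof.
apply: (@cancel_l _ _ _ _ _ (runit (tens a b)) (runitinv (tens a b))); last exact: rKV.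
rewrite rK K1; rw (rwc (aK _ _ _)). by rewrite idl -tsl rK tid.
Qed.
Lemma K2inv a b : lunitinv (tens a b) = assoc unitO a b \oc lunitinv a ⊗ idm b.
Proof.
apply: (@cancel_l _ _ _ _ _ (lunit (tens a b)) (lunitinv (tens a b))); last exact: lKV.
rewrite lK. rw (K2 _ _). by rewrite -tsr lK tid.
Qed.

Lemma rinat a b (f : Hom a b) : f ⊗ idm unitO \oc runitinv a = runitinv b \oc f.
Proof.
apply: (@cancel_l _ _ _ _ _ (runit b) (runitinv b)); last exact: rKV.
by rewrite cA rnat -cA rK cA rK idl idr.
Qed.
Lemma linat a b (f : Hom a b) : idm unitO ⊗ f \oc lunitinv a = lunitinv b \oc f.
Proof.
apply: (@cancel_l _ _ _ _ _ (lunit b) (lunitinv b)); last exact: lKV.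
by rewrite cA lnat -cA lK cA lK idl idr.
Qed.
Lemma triI a b : runit a ⊗ idm b \oc associnv a unitO b = idm a ⊗ lunit b.
Proof. by rewrite -tri -cA aK idr. Qed.

Lemma rtens_mono X R ev coev : dual_pair C X R ev coev ->
  forall S T (i : Hom S T), is_mono C i -> is_mono C (i ⊗ idm X).
Proof.
move=> [_ Z2] S T i mi P g h e.
pose Psi Q (k : Hom P (tens Q X)) := runit Q \oc (idm Q ⊗ ev \oc (assoc Q X R \oc k ⊗ idm R)).
have nat k : Psi T ((i ⊗ idm X) \oc k) = i \oc Psi S k.
  rewrite /Psi tsr. rw (anat _ _ _). rewrite tid. rw (tx _ _). by rw (rnat _).
have W (k : Hom P (tens S X)) :
    (Psi S k ⊗ idm X) \oc (associnv P R X \oc (idm P ⊗ coev \oc runitinv P)) = k.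
  rewrite /Psi !tsr. rw (esym (ainat _ _ _)). rewrite tid.
  rw (esym (tx _ _)). rw (rinat _). rewrite K1inv -[idm (tens S X)]tid.
  rw (esym (ainat _ _ _)). rw (PI _ _ _ _). rw (esym (ainat _ _ _)).
  rw (triI _ _). rewrite -!cA in Z2.
  do 4 rw (esym (tsl _ _ _)). by rewrite Z2 tid idl.
have : Psi S g = Psi S h by apply: mi; rewrite -!nat e.
by move=> E; rewrite -(W g) -(W h) E.
Qed.

Lemma ltens_mono T' T ev coev : dual_pair C T' T ev coev ->
  forall S S' (i : Hom S S'), is_mono C i -> is_mono C (idm T ⊗ i).
Proof.
move=> [Z1 _] S S' i mi P g h e.
pose Psi Q (k : Hom P (tens T Q)) := lunit Q \oc (ev ⊗ idm Q \oc (associnv T' T Q \oc idm T' ⊗ k)).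
have nat k : Psi S' ((idm T ⊗ i) \oc k) = i \oc Psi S k.
  rewrite /Psi tsl. rw (ainat _ _ _). rewrite tid. rw (esym (tx _ _)). by rw (lnat _).
have W (k : Hom P (tens T S)) :
    (idm T ⊗ Psi S k) \oc (assoc T T' P \oc (coev ⊗ idm P \oc lunitinv P)) = k.
  rewrite /Psi !tsl. rw (esym (anat _ _ _)). rewrite tid.
  rw (tx _ _). rw (linat _). rewrite K2inv -[idm (tens T S)]tid.
  rw (esym (anat _ _ _)). rw (PL _ _ _ _). rw (esym (anat _ _ _)).
  rw (tri _ _). rewrite -!cA in Z1.
  do 4 rw (esym (tsr _ _ _)). by rewrite Z1 tid idl.
have : Psi S g = Psi S h by apply: mi; rewrite -!nat e.
by move=> E; rewrite -(W g) -(W h) E.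
Qed.

Hypothesis HA : is_abelian C.

Lemma kernel_ex a b (f : Hom a b) : exists k (i : Hom k a), is_kernel C i f.
Proof. by case: HA => _ [_ [_ [h _]]]. Qed.
Lemma coker_ex a b (f : Hom a b) : exists q (p : Hom b q), is_cokernel C p f.
Proof. by case: HA => _ [_ [_ [_ [h _]]]]. Qed.
Lemma epi_normal a b (e : Hom a b) : is_epi C e -> exists c (f : Hom c a), is_cokernel C e f.
Proof. by case: HA => _ [_ [_ [_ [_ [_ h]]]]]; apply: h. Qed.

Lemma simple1_mono : simple_obj C (@unitO C) ->
  forall Z (f : Hom unitO Z), f <> 0 -> is_mono C f.
Proof.
move=> [_ hs] Z f f0.
have [k [i [fi univ]]] := kernel_ex f.
have mi : is_mono C i.
  move=> x g h e.
  have fg : f \oc (i \oc g) = 0 by rewrite cA fi comp0l.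
  have [t [_ ut]] := univ x (i \oc g) fg.
  by rewrite -(ut g) // (ut h).
case: (hs k i mi) => [kz | [j [ji ij]]].
  move=> x g h e.
  have fg : f \oc (g - h) = 0 by rewrite cBr e subrr.
  have [t [ht _]] := univ x (g - h) fg.
  apply/eqP; rewrite -subr_eq0 -ht -[t]idl.
  by move: kz; rewrite /is_zero_obj => ->; rewrite comp0l comp0r.
by case: f0; rewrite -[f]idr -ij cA fi comp0l.
Qed.

Lemma mono_iso S T (i : Hom S T) : is_mono C i ->
  (forall Q (c : Hom T Q), c \oc i = 0 -> c = 0) -> is_iso C i.
Proof.
move=> mi hc.
have [q [p [pi univ]]] := coker_ex i.
have p0 := hc _ _ pi.
have ei : is_epi C i.
  move=> x g h e.
  have fg : (g - h) \oc i = 0 by rewrite cBl e subrr.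
  have [t [ht _]] := univ x (g - h) fg.
  by apply/eqP; rewrite -subr_eq0 -ht p0 comp0r.
have [c [f [if0 univ2]]] := epi_normal ei.
have f0 : f = 0 by apply: mi; rewrite if0 comp0r.
have fr : idm S \oc f = 0 by rewrite f0 comp0r.
have [r [ri _]] := univ2 S (idm S) fr.
exists r; split => //.
by apply: ei; rewrite -cA ri idr idl.
Qed.

Hypothesis HR : is_rigid C.

Lemma faith_r : simple_obj C (@unitO C) -> forall X : Ob C, idm X <> 0 ->
  forall (S T : Ob C) (f : Hom S T), f ⊗ idm X = 0 -> f = 0.
Proof.
move=> H1 X hX S T f e.
have [[L [ev [coev dp]]] _] := HR X.
have c0 : coev <> 0.
  move=> c0; case: dp => Z1 _; apply: hX; by rewrite -Z1 c0 t0r comp0r comp0l.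
have mc := simple1_mono H1 c0.
have [[T' [evT [coevT dpT]]] _] := HR T.
have mT := ltens_mono dpT mc.
have h1 : f ⊗ idm (tens X L) = 0.
  have : f ⊗ (idm X ⊗ idm L) \oc assoc S X L = 0 by rewrite -anat e t0r comp0r.
  by rewrite tid => h; rewrite -[LHS]idr -(aK S X L) cA h comp0l.
apply: r_inj; rewrite t0r; apply: mT; rewrite comp0r.
by rewrite -tsplit' tsplit h1 comp0l.
Qed.

Lemma faith_l : simple_obj C (@unitO C) -> forall X : Ob C, idm X <> 0 ->
  forall (S T : Ob C) (f : Hom S T), idm X ⊗ f = 0 -> f = 0.
Proof.
move=> H1 X hX S T f e.
have [_ [R [ev [coev dp]]]] := HR X.
have c0 : coev <> 0.
  move=> c0; case: dp => _ Z2; apply: hX; by rewrite -Z2 c0 t0l comp0r comp0l.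
have mc := simple1_mono H1 c0.
have [_ [T' [evT [coevT dpT]]]] := HR T.
have mT := rtens_mono dpT mc.
have h1 : idm (tens R X) ⊗ f = 0.
  have : (idm R ⊗ idm X) ⊗ f \oc associnv R X S = 0 by rewrite -ainat e t0l comp0r.
  by rewrite tid => h; rewrite -[LHS]idr -(aKV R X S) cA h comp0l.
apply: l_inj; rewrite t0l; apply: mT; rewrite comp0r.
by rewrite -tsplit tsplit' h1 comp0l.
Qed.

Variable A : Alg C.
Hypothesis HAlg : is_algebra C A.
Local Notation aa := (alg_obj C A).
Local Notation mm := (alg_mul C A).
Local Notation uu := (alg_unit C A).

Definition ltensM (N : LMod C A) (X : Ob C) : LMod C A :=
  {| lm_obj := tens (lm_obj C A N) X;
     lm_act := lm_act C A N ⊗ idm X \oc associnv aa (lm_obj C A N) X |}.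

Lemma PI2 a b c d :
  assoc a b c ⊗ idm d \oc associnv (tens a b) c d
  = associnv a (tens b c) d \oc (idm a ⊗ associnv b c d \oc assoc a b (tens c d)).
Proof. by rewrite cA -PI -!cA aKV idr. Qed.

Lemma reg_lmod : is_lmod C A (regular_lmod C A).
Proof. by case: HAlg => h1 [h2 _]; split. Qed.

Lemma tens_lmod N X : is_lmod C A N -> is_lmod C A (ltensM N X).
Proof.
case=> hA hU; split => /=.
  rewrite -!cA -[idm (tens _ X)]tid. rw (ainat _ _ _). rw (esym (tsr _ _ _)).
  rewrite hA !tsr -!cA. symmetry. rewrite tsl. rw (ainat _ _ _). by rewrite PI2.
rewrite -!cA -[idm (tens _ X)]tid. rw (ainat _ _ _). rw (esym (tsr _ _ _)).
rewrite hU. apply: (@cancel_r _ _ _ _ _ (assoc unitO (lm_obj C A N) X) (associnv unitO (lm_obj C A N) X)).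
  by rewrite -cA aKV idr K2.
exact: aK.
Qed.

Lemma tens_lhom (N M : LMod C A) X (i : Hom (lm_obj C A N) (lm_obj C A M)) :
  lmod_hom C A N M i -> lmod_hom C A (ltensM N X) (ltensM M X) (i ⊗ idm X).
Proof.
rewrite /lmod_hom /= => h.
rewrite cA -tsr h tsr -!cA. by rw (esym (ainat _ _ _)).
Qed.

Lemma lmono_mono (N M : LMod C A) (i : Hom (lm_obj C A N) (lm_obj C A M)) :
  is_lmod C A N -> lmod_hom C A N M i -> lmod_mono C A N M i -> is_mono C i.
Proof.
move=> [hA hU] hi mi P g h e.
pose hat (k : Hom P (lm_obj C A N)) := lm_act C A N \oc idm aa ⊗ k.
have hhat k : lmod_hom C A (ltensM (regular_lmod C A) P) N (hat k).
  rewrite /lmod_hom /hat /=. rw (tx _ _). rewrite -[idm (tens aa aa)]tid.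
  rewrite cA hA -!cA. rw (anat _ _ _). by rewrite aK idr tsl.
have ih k : i \oc hat k = lm_act C A M \oc idm aa ⊗ (i \oc k).
  by rewrite /hat cA hi -cA -tsl.
have E : hat g = hat h.
  apply: (mi (ltensM (regular_lmod C A) P)); [exact: tens_lmod reg_lmod | exact: hhat | exact: hhat |].
  by rewrite !ih e.
have rec k : k = hat k \oc (uu ⊗ idm P \oc lunitinv P).
  rewrite /hat -!cA. rw (tx _ _). by rewrite cA hU linat cA lK idl.
by rewrite (rec g) (rec h) E.
Qed.

Lemma left_main : simple_obj C (@unitO C) -> ~ is_zero_obj C aa ->
  (exists M, simple_lmod C A M) -> left_essential_division C A ->
  left_simplistic_division C A.
Proof.
move=> H1 a0 [M [lM [M0 sM]]] [_ ess].
split => //; split; first exact: reg_lmod.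
split; first exact: a0.
move=> N lN i hi mi.
have mci := lmono_mono lN hi mi.
have [X [phi [hphi [psi [hpsi [psiphi phipsi]]]]]] := ess M lM.
have X0 : idm X <> 0.
  move=> X0; apply: M0.
  have z : idm (tens aa X) = 0 by rewrite -tid X0 t0l.
  by rewrite /lmod_zero -phipsi -[psi]idl /= z comp0l comp0r.
have [_ [R [ev [coev dpR]]]] := HR X.
have mix := rtens_mono dpR mci.
pose j := phi \oc (i ⊗ idm X).
have mj : is_mono C j.
  move=> P g h e; apply: mix.
  by rewrite -[_ \oc g]idl -[_ \oc h]idl -psiphi -!cA (cA phi) e -cA.
have hj : lmod_hom C A (ltensM N X) M j.
  rewrite /lmod_hom /j -cA (tens_lhom X hi) cA.
  have hp : phi \oc lm_act C A (ltensM (regular_lmod C A) X) = lm_act C A M \oc idm aa ⊗ phi := hphi.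
  by rewrite hp -cA -tsl.
have lmj : lmod_mono C A (ltensM N X) M j by move=> P _ g h _ _ e; apply: mj.
case: (sM (ltensM N X) (tens_lmod X lN) j hj lmj) => [z | [k [_ [kj jk]]]].
  left; rewrite /lmod_zero; apply: (faith_r H1 X0); rewrite tid; exact: z.
right.
have inv : (i ⊗ idm X) \oc (k \oc phi) = idm _.
  have : psi \oc (j \oc k) \oc phi = idm _ by rewrite jk idr psiphi.
  by rewrite /j -!cA cA psiphi idl.
have [r [ri ir]] : is_iso C i.
  apply: mono_iso mci _ => Q c ci; apply: (faith_r H1 X0).
  by rewrite -[c ⊗ idm X]idr -inv cA -tsr ci t0r comp0l.
exists r; split => //.
have e1 : idm aa ⊗ (i \oc r) = idm (tens aa aa) by rewrite ir tid.
rewrite /lmod_hom /= -[r \oc mm]idr -e1 tsl cA -(cA r) -hi cA ri idl //.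
Qed.

Definition rtensM (X : Ob C) (N : RMod C A) : RMod C A :=
  {| rm_obj := tens X (rm_obj C A N);
     rm_act := idm X ⊗ rm_act C A N \oc assoc X (rm_obj C A N) aa |}.

Lemma reg_rmod : is_rmod C A (regular_rmod C A).
Proof. by case: HAlg => h1 [_ h3]; split. Qed.

Lemma tens_rmod X N : is_rmod C A N -> is_rmod C A (rtensM X N).
Proof.
case=> hA hU; split => /=.
  rewrite tsr -!cA. rw (anat _ _ _). rw (esym (tsl _ _ _)).
  rewrite hA !tsl -!cA pentR. rewrite -[idm (tens X _)]tid.
  by rw (anat _ _ _).
rewrite -!cA -[idm (tens X _)]tid. rw (anat _ _ _). rw (esym (tsl _ _ _)).
by rewrite hU K1.
Qed.

Lemma tens_rhom (N M : RMod C A) X (i : Hom (rm_obj C A N) (rm_obj C A M)) :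
  rmod_hom C A N M i -> rmod_hom C A (rtensM X N) (rtensM X M) (idm X ⊗ i).
Proof.
rewrite /rmod_hom /= => h.
rewrite cA -tsl h tsl -!cA. by rw (esym (anat _ _ _)).
Qed.

Lemma rmono_mono (N M : RMod C A) (i : Hom (rm_obj C A N) (rm_obj C A M)) :
  is_rmod C A N -> rmod_hom C A N M i -> rmod_mono C A N M i -> is_mono C i.
Proof.
move=> [hA hU] hi mi P g h e.
pose hat (k : Hom P (rm_obj C A N)) := rm_act C A N \oc k ⊗ idm aa.
have hhat k : rmod_hom C A (rtensM P (regular_rmod C A)) N (hat k).
  rewrite /rmod_hom /hat /= -!cA. rw (esym (tx _ _)). rewrite -[idm (tens aa aa)]tid.
  rw (esym (anat _ _ _)). rewrite -!cA in hA. rw (esym hA). by rewrite tsr.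
have ih k : i \oc hat k = rm_act C A M \oc (i \oc k) ⊗ idm aa.
  by rewrite /hat cA hi -cA -tsr.
have E : hat g = hat h.
  apply: (mi (rtensM P (regular_rmod C A))); [exact: tens_rmod reg_rmod | exact: hhat | exact: hhat |].
  by rewrite !ih e.
have rec k : k = hat k \oc (idm P ⊗ uu \oc runitinv P).
  rewrite /hat -!cA. rw (esym (tx _ _)). by rewrite cA hU rinat cA rK idl.
by rewrite (rec g) (rec h) E.
Qed.

Lemma right_main : simple_obj C (@unitO C) -> ~ is_zero_obj C aa ->
  (exists M, simple_rmod C A M) -> right_essential_division C A ->
  right_simplistic_division C A.
Proof.
move=> H1 a0 [M [lM [M0 sM]]] [_ ess].
split => //; split; first exact: reg_rmod.
split; first exact: a0.
move=> N lN i hi mi.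
have mci := rmono_mono lN hi mi.
have [X [phi [hphi [psi [hpsi [psiphi phipsi]]]]]] := ess M lM.
have X0 : idm X <> 0.
  move=> X0; apply: M0.
  have z : idm (tens X aa) = 0 by rewrite -tid X0 t0r.
  by rewrite /rmod_zero -phipsi -[psi]idl /= z comp0l comp0r.
have [[L [ev [coev dpL]]] _] := HR X.
have mix := ltens_mono dpL mci.
pose j := phi \oc (idm X ⊗ i).
have mj : is_mono C j.
  move=> P g h e; apply: mix.
  by rewrite -[_ \oc g]idl -[_ \oc h]idl -psiphi -!cA (cA phi) e -cA.
have hj : rmod_hom C A (rtensM X N) M j.
  rewrite /rmod_hom /j -cA (tens_rhom X hi) cA.
  have hp : phi \oc rm_act C A (rtensM X (regular_rmod C A)) = rm_act C A M \oc phi ⊗ idm aa := hphi.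
  by rewrite hp -cA -tsr.
have lmj : rmod_mono C A (rtensM X N) M j by move=> P _ g h _ _ e; apply: mj.
case: (sM (rtensM X N) (tens_rmod X lN) j hj lmj) => [z | [k [_ [kj jk]]]].
  left; rewrite /rmod_zero; apply: (faith_l H1 X0); rewrite tid; exact: z.
right.
have inv : (idm X ⊗ i) \oc (k \oc phi) = idm _.
  have : psi \oc (j \oc k) \oc phi = idm _ by rewrite jk idr psiphi.
  by rewrite /j -!cA cA psiphi idl.
have [r [ri ir]] : is_iso C i.
  apply: mono_iso mci _ => Q c ci; apply: (faith_l H1 X0).
  by rewrite -[idm X ⊗ c]idr -inv cA -tsl ci t0l comp0l.
exists r; split => //.
have e1 : (i \oc r) ⊗ idm aa = idm (tens aa aa) by rewrite ir tid.
rewrite /rmod_hom /= -[r \oc mm]idr -e1 tsr cA -(cA r) -hi cA ri idl //.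
Qed.

End Basics.

Unset Implicit Arguments.
Set Strict Implicit.

Theorem proposition3p4 (C : MonCat) (A : Alg C) :
  rigid_abelian_monoidal C ->
  simple_obj C unitO ->
  is_algebra C A ->
  ~ is_zero_obj C (alg_obj C A) ->
  ((exists M : LMod C A, simple_lmod C A M) ->
     left_essential_division C A -> left_simplistic_division C A) /\
  ((exists M : RMod C A, simple_rmod C A M) ->
     right_essential_division C A -> right_simplistic_division C A).
Proof.
move=> [HA [HM [HT HR]]] H1 HAlg a0.
have HP : is_preadditive_category C by case: HA.
split.
  exact: (left_main HP HM HT HA HR HAlg H1 a0).
exact: (right_main HP HM HT HA HR HAlg H1 a0).
Qed.
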